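(* Consider the FlexPD-C iterates described in the context with integer $T\ge1$, let $C=\sum_{t=0}^{T-1}(I-\alpha B)^t$, $M=C^{-1}(I-\alpha B)^T$, $z^k=\begin{bmatrix}x^k\\ \lambda^k\end{bmatrix}$, $z^*=\begin{bmatrix}x^*\\ \lambda^*\end{bmatrix}$ and $\mathcal G_C=\begin{bmatrix}M&0\\0&\frac{\alpha}{\beta}I\end{bmatrix}$. Let $0<\eta_4<2m$. If \[0<\beta<\frac{2m-\eta_4}{\rho(A'A)}\quad\text{and}\quad 0<\alpha<\frac{1-\Big(\frac{L^2}{L^2+\eta_4\rho(B)}\Big)^{1/T}}{\rho(B)},\] then there exists $\delta_C>0$ such that for all $k\ge0$, \[\|z^{k+1}-z^*\|_{\mathcal G_C}^2\le\frac{1}{1+\delta_C}\|z^k-z^*\|_{\mathcal G_C}^2,\] that is, $\|z^k-z^*\|_{\mathcal G_C}$ converges Q-linearly to $0$ and consequently $\|x^k-x^*\|_M$ converges R-linearly to $0$.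
   Context: Setting: $n$ agents are connected by a connected undirected graph with edge set $\mathcal E$, $\epsilon=|\mathcal E|$. For $x\in\mathbb R^n$ let $f(x)=\sum_{i=1}^n f_i(x_i)$, where each $f_i:\mathbb R\to\mathbb R$ is twice differentiable with $m\le f_i''\le L$ for constants $0<m\le L$; $\nabla f(x)=(f_1'(x_1),\dots,f_n'(x_n))'$. $A\in\mathbb R^{\epsilon\times n}$ is the edge–node incidence matrix (null space spanned by the all-ones vector). $B\in\mathbb R^{n\times n}$ is symmetric positive semidefinite with the same null space as $A$ (so $B\neq0$), off-diagonal entries nonzero only on edges. $x^*$ is the unique minimizer of $f$ subject to $Ax=0$ and $\lambda^*$ a Lagrange multiplier with $\nabla f(x^* )+A'\lambda^*=0$, $Ax^*=0$, $Bx^*=0$, chosen in the column space of $A$. FlexPD-C: given $\alpha,\beta>0$, $T\ge1$, $x^0$ arbitrary, $\lambda^0=0$; for $k\ge0$: $x^{k+1,0}=x^k$; for $t=1,\dots,T$, $x^{k+1,t}=x^{k+1,t-1}-\alpha\nabla f(x^k)-\alpha A'\lambda^k-\alpha Bx^{k+1,t-1}$; then $x^{k+1}=x^{k+1,T}$, $\lambda^{k+1}=\lambda^k+\beta Ax^{k+1}$. Notation: $\rho(S)$ largest eigenvalue of symmetric $S$; $\|v\|_S^2=v'Sv$; $\|\cdot\|$ Euclidean norm. *)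

(* Defs.v *)
From HB Require Import structures.
From mathcomp Require Import all_boot all_order all_algebra.
From mathcomp Require Import all_classical all_reals all_analysis.
Set Implicit Arguments. Unset Strict Implicit. Unset Printing Implicit Defensive.
Import Order.TTheory GRing.Theory Num.Theory.
Local Open Scope ring_scope.

Section FlexPD.
Variable R : realType.

(* An undirected graph on nodes 'I_n with eps edges, edge e joining the two
   distinct nodes (E e).1 and (E e).2 (the pair fixes an arbitrary orientation). *)
Definition adj n eps (E : 'I_eps -> 'I_n * 'I_n) : rel 'I_n :=
  fun i j => [exists e, (E e == (i, j)) || (E e == (j, i))].

Definition simple_graph n eps (E : 'I_eps -> 'I_n * 'I_n) : Prop :=
  (forall e, (E e).1 != (E e).2) /\
  (forall e1 e2, (E e1 == E e2) || (E e1 == ((E e2).2, (E e2).1)) -> e1 = e2).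

Definition connected_graph n eps (E : 'I_eps -> 'I_n * 'I_n) : Prop :=
  forall i j, connect (adj E) i j.

Definition incidence n eps (E : 'I_eps -> 'I_n * 'I_n) : 'M[R]_(eps, n) :=
  \matrix_(e, i) (if i == (E e).1 then 1 else if i == (E e).2 then -1 else 0).

Definition is_largest_eig n (S : 'M[R]_n) (r : R) : Prop :=
  eigenvalue S r /\ (forall a, eigenvalue S a -> a <= r).

Definition wnorm2 n (S : 'M[R]_n) (v : 'cV[R]_n) : R := (v^T *m S *m v) 0 0.

Definition fsum n (f : 'I_n -> R -> R) (x : 'cV[R]_n) : R := \sum_i f i (x i 0).

Definition gradf n (f : 'I_n -> R -> R) (x : 'cV[R]_n) : 'cV[R]_n :=
  \col_i (derive1 (f i) (x i 0)).

Definition flexpd_step n eps (f : 'I_n -> R -> R) (A : 'M[R]_(eps, n)) (B : 'M[R]_n)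
  (alpha beta : R) (T : nat) (z : 'cV[R]_n * 'cV[R]_eps) : 'cV[R]_n * 'cV[R]_eps :=
  let: (x, lam) := z in
  let x' := iter T (fun y => y - alpha *: gradf f x - alpha *: (A^T *m lam)
                               - alpha *: (B *m y)) x in
  (x', lam + beta *: (A *m x')).

Definition flexpd n eps (f : 'I_n -> R -> R) (A : 'M[R]_(eps, n)) (B : 'M[R]_n)
  (alpha beta : R) (T : nat) (x0 : 'cV[R]_n) (k : nat) : 'cV[R]_n * 'cV[R]_eps :=
  iter k (flexpd_step f A B alpha beta T) (x0, 0).

Definition Cmat n (B : 'M[R]_n) (alpha : R) (T : nat) : 'M[R]_n :=
  \sum_(t < T) (1%:M - alpha *: B) ^+ t.

Definition Mmat n (B : 'M[R]_n) (alpha : R) (T : nat) : 'M[R]_n :=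
  invmx (Cmat B alpha T) *m (1%:M - alpha *: B) ^+ T.

Definition GCmat n eps (B : 'M[R]_n) (alpha beta : R) (T : nat) : 'M[R]_(n + eps) :=
  block_mx (Mmat B alpha T) 0 0 ((alpha / beta)%:M).

Definition GCdist2 n eps (B : 'M[R]_n) (alpha beta : R) (T : nat)
  (z zs : 'cV[R]_n * 'cV[R]_eps) : R :=
  wnorm2 (GCmat eps B alpha beta T) (col_mx (z.1 - zs.1) (z.2 - zs.2)).

End FlexPD.

(* Main.v *)
Require Import Defs.
From HB Require Import structures.
From mathcomp Require Import all_boot all_order all_algebra.
From mathcomp Require Import all_classical all_reals all_analysis.
From mathcomp Require Import ring lra.
From mathcomp Require Import spectral sesquilinear.
From mathcomp Require complex.
Set Implicit Arguments. Unset Strict Implicit. Unset Printing Implicit Defensive.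
Import Order.TTheory GRing.Theory Num.Theory.
Local Open Scope ring_scope.


Module Spec.
Import complex Num.Def.
Local Open Scope complex_scope.

Section S.
Variable R : rcfType.
Local Notation C := (R[i]).
Local Notation toC := (real_complex R).

Lemma toC_real (x : R) : toC x \is Num.real.
Proof. by rewrite complex_real. Qed.

Lemma conj_toC (x : R) : conjC (toC x) = toC x.
Proof. exact/conj_Creal/toC_real. Qed.

Lemma real_eq_toC (z : C) : z \is Num.real -> z = toC (Re z).
Proof. by case: z => a b; rewrite complex_real => /eqP ->. Qed.

Lemma real_spectral n (S : 'M[R]_n.+1) : S^T = S ->
  exists d : 'rV[R]_n.+1, (forall i, eigenvalue S (d 0 i)) /\
   forall v : 'cV[R]_n.+1, exists w : 'I_n.+1 -> R, (forall i, 0 <= w i) /\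
     forall p : {poly R}, (v^T *m horner_mx S p *m v) 0 0 = \sum_i p.[d 0 i] * w i.
Proof.
move=> Ssym.
pose SC := map_mx toC S.
have herm : SC \is hermsymmx.
  apply/is_hermitianmxP; rewrite expr0 scale1r.
  by apply/matrixP => i j; rewrite !mxE conj_toC -[in LHS]Ssym mxE.
have /orthomx_spectralP SCE := hermitian_normalmx herm.
have /mxOverP spreal := hermitian_spectral_diag_real herm.
set P := spectralmx SC in SCE.
set sp := spectral_diag SC in SCE spreal.
have Pu : P \is unitarymx by exact: spectral_unitarymx.
have Punit : P \in unitmx by exact: spectral_unit.
pose d := \row_i Re (sp 0 i).
have spE i : sp 0 i = toC (d 0 i) by rewrite mxE -real_eq_toC.
exists d; split.
  move=> i; rewrite -(eigenvalue_map toC).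
  suff: eigenvalue SC (sp 0 i) by rewrite spE; apply.
  apply/eigenvalueP; exists (row i P).
    by rewrite -/SC SCE !mulmxA -row_mul mulmxV // row1 -rowE row_diag_mx -scalemxAl -rowE.
  apply/eqP => /(congr1 (fun r => r *m invmx P)).
  rewrite -row_mul mulmxV // mul0mx row1 => /rowP /(_ i); by rewrite !mxE => /eqP; rewrite eqxx /= [i == i]eqxx oner_eq0.
move=> v; pose vC := map_mx toC v; pose z := P *m vC.
have vCreal : map_mx conjC vC = vC by apply/matrixP => i j; rewrite !mxE conj_toC.
exists (fun i => Re (z i 0) ^+ 2 + Im (z i 0) ^+ 2); split.
  by move=> i; rewrite addr_ge0 ?sqr_ge0.
move=> p; apply: complexI.
have -> : toC ((v^T *m horner_mx S p *m v) 0 0) = (vC^T *m horner_mx SC (map_poly toC p) *m vC) 0 0.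
  by rewrite -map_horner_mx map_trmx -!map_mxM [in RHS]mxE.
rewrite SCE horner_mx_uconjC // horner_mx_diag invmx_unitary //.
have zc : vC^T *m (P^t*)%sesqui = (map_mx conjC z)^T.
  by rewrite /z map_mxM trmx_mul vCreal; congr (_ *m _); apply/matrixP=> i j; rewrite !mxE.
rewrite !mulmxA zc -mulmxA -/z mxE rmorph_sum; apply: eq_bigr => i _.
rewrite mul_mx_diag !mxE spE horner_map rmorphM /= add_Re2_Im2 normCKC.
by rewrite mulrAC mulrC.
Qed.
End S.
End Spec.

Section LA.
Variable R : realType.

Definition dot n (u v : 'cV[R]_n) : R := (u^T *m v) 0 0.
Definition nn n (u : 'cV[R]_n) : R := dot u u.
Definition qf n (S : 'M[R]_n) (u : 'cV[R]_n) : R := dot u (S *m u).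

Lemma dotE n (u v : 'cV[R]_n) : dot u v = \sum_i u i 0 * v i 0.
Proof. by rewrite /dot mxE; apply: eq_bigr => i _; rewrite mxE. Qed.

Lemma dotC n (u v : 'cV[R]_n) : dot u v = dot v u.
Proof. by rewrite !dotE; apply: eq_bigr => i _; rewrite mulrC. Qed.

Lemma dotDr n (u v w : 'cV[R]_n) : dot u (v + w) = dot u v + dot u w.
Proof. by rewrite !dotE -big_split; apply: eq_bigr => i _; rewrite mxE mulrDr. Qed.

Lemma dotDl n (u v w : 'cV[R]_n) : dot (v + w) u = dot v u + dot w u.
Proof. by rewrite dotC dotDr !(dotC u). Qed.

Lemma dotZr n a (u v : 'cV[R]_n) : dot u (a *: v) = a * dot u v.
Proof. by rewrite !dotE mulr_sumr; apply: eq_bigr => i _; rewrite mxE mulrCA. Qed.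

Lemma dotZl n a (u v : 'cV[R]_n) : dot (a *: v) u = a * dot v u.
Proof. by rewrite dotC dotZr dotC. Qed.

Lemma dotNr n (u v : 'cV[R]_n) : dot u (- v) = - dot u v.
Proof. by rewrite -scaleN1r dotZr mulN1r. Qed.

Lemma dotNl n (u v : 'cV[R]_n) : dot (- v) u = - dot v u.
Proof. by rewrite dotC dotNr dotC. Qed.

Lemma dotBr n (u v w : 'cV[R]_n) : dot u (v - w) = dot u v - dot u w.
Proof. by rewrite dotDr dotNr. Qed.

Lemma dotBl n (u v w : 'cV[R]_n) : dot (v - w) u = dot v u - dot w u.
Proof. by rewrite dotDl dotNl. Qed.

Lemma dot0r n (u : 'cV[R]_n) : dot u 0 = 0.
Proof. by rewrite dotE big1 // => i _; rewrite mxE mulr0. Qed.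

Lemma dot_mulmx m n (S : 'M[R]_(m, n)) u v : dot u (S *m v) = dot (S^T *m u) v.
Proof. by rewrite /dot trmx_mul trmxK mulmxA. Qed.

Lemma nn_ge0 n (u : 'cV[R]_n) : 0 <= nn u.
Proof. by rewrite /nn dotE sumr_ge0 // => i _; rewrite -expr2 sqr_ge0. Qed.

Lemma nn_eq0 n (u : 'cV[R]_n) : nn u = 0 -> u = 0.
Proof.
rewrite /nn dotE => /eqP; rewrite psumr_eq0 => [/allP h|i _]; last by rewrite -expr2 sqr_ge0.
apply/matrixP => i j; rewrite ord1 mxE; have := h i (mem_index_enum _).
by rewrite -expr2 sqrf_eq0 => /eqP.
Qed.

Lemma nnZ n a (u : 'cV[R]_n) : nn (a *: u) = a ^+ 2 * nn u.
Proof. by rewrite /nn dotZl dotZr mulrA expr2. Qed.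

Lemma nnN n (u : 'cV[R]_n) : nn (- u) = nn u.
Proof. by rewrite /nn dotNl dotNr opprK. Qed.

Lemma nnD n (u v : 'cV[R]_n) : nn (u + v) = nn u + 2 * dot u v + nn v.
Proof. rewrite /nn !dotDl !dotDr (dotC v u); ring. Qed.

Lemma nnB n (u v : 'cV[R]_n) : nn (u - v) = nn u - 2 * dot u v + nn v.
Proof. by rewrite nnD nnN dotNr; ring. Qed.

Lemma dot_le n (u v : 'cV[R]_n) c : 0 < c -> 2 * dot u v <= c * nn u + c^-1 * nn v.
Proof.
move=> c0; have := nn_ge0 (c *: u - v); rewrite nnB nnZ dotZl.
have h : c^-1 * (c ^+ 2 * nn u - 2 * (c * dot u v) + nn v) = c * nn u - 2 * dot u v + c^-1 * nn v.
  by field; rewrite gt_eqF.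
move=> h0; have ci : 0 <= c^-1 by rewrite invr_ge0 ltW.
have := mulr_ge0 ci h0; rewrite h; lra.
Qed.

Lemma nnD_le n (u v : 'cV[R]_n) : nn (u + v) <= 2 * nn u + 2 * nn v.
Proof. have := dot_le u v ltr01; rewrite nnD invr1; lra. Qed.


Lemma qf_hornerE n (S : 'M[R]_n.+1) p v :
  qf (horner_mx S p) v = (v^T *m horner_mx S p *m v) 0 0.
Proof. by rewrite /qf /dot mulmxA. Qed.

Lemma psd_poly n (S : 'M[R]_n.+1) (p : {poly R}) : S^T = S ->
  (forall a, eigenvalue S a -> 0 <= p.[a]) -> forall v, 0 <= qf (horner_mx S p) v.
Proof.
move=> Ssym hp v; have [d [hd hv]] := Spec.real_spectral Ssym.
have [w [w0 hw]] := hv v; rewrite qf_hornerE hw.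
by apply: sumr_ge0 => i _; apply: mulr_ge0 => //; apply: hp.
Qed.

Lemma nn_qf m n (S : 'M[R]_(m, n)) v : nn (S *m v) = qf (S^T *m S) v.
Proof. by rewrite /nn /qf dot_mulmx dotC mulmxA. Qed.

Lemma bound_any p n (S : 'M[R]_(p, n.+1)) : exists K, 0 <= K /\ forall v, nn (S *m v) <= K * nn v.
Proof.
have Ssym : (S^T *m S)^T = S^T *m S by rewrite trmx_mul trmxK.
have [d [_ hv]] := Spec.real_spectral Ssym.
exists (\sum_i `|d 0 i|); split; first by apply: sumr_ge0 => i _.
move=> v; have [w [w0 hw]] := hv v.
have e1 : qf (S^T *m S) v = \sum_i d 0 i * w i.
  have := hw 'X; rewrite horner_mx_X => h.
  by rewrite /qf /dot mulmxA h; apply eq_bigr => i _; rewrite hornerX.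
have e2 : nn v = \sum_i w i.
  rewrite /nn /dot -[v^T]mulmx1 -(horner_mx_C (S^T *m S)) hw.
  by apply eq_bigr => i _; rewrite hornerC mul1r.
rewrite nn_qf e1 e2 mulr_sumr.
apply: ler_sum => i _; rewrite ler_wpM2r //.
rewrite (le_trans (ler_norm _)) // (bigD1 i) //= lerDl sumr_ge0 //.
Qed.


Lemma qfBl n (S1 S2 : 'M[R]_n) v : qf (S1 - S2) v = qf S1 v - qf S2 v.
Proof. by rewrite /qf mulmxBl dotBr. Qed.

Lemma qfDl n (S1 S2 : 'M[R]_n) v : qf (S1 + S2) v = qf S1 v + qf S2 v.
Proof. by rewrite /qf mulmxDl dotDr. Qed.

Lemma qfZl n a (S : 'M[R]_n) v : qf (a *: S) v = a * qf S v.
Proof. by rewrite /qf -scalemxAl dotZr. Qed.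

Lemma qf1 n (v : 'cV[R]_n) : qf 1%:M v = nn v.
Proof. by rewrite /qf mul1mx. Qed.

Lemma poly_ineq n (S : 'M[R]_n.+1) (p q : {poly R}) : S^T = S ->
  (forall a, eigenvalue S a -> q.[a] <= p.[a]) ->
  forall v, qf (horner_mx S q) v <= qf (horner_mx S p) v.
Proof.
move=> Ssym h v; have := @psd_poly n S (p - q) Ssym _ v.
rewrite rmorphB qfBl subr_ge0; apply => a ha; rewrite hornerD hornerN subr_ge0; exact: h.
Qed.

Lemma eig_ge0 n (S : 'M[R]_n) a : S^T = S -> (forall v, 0 <= qf S v) ->
  eigenvalue S a -> 0 <= a.
Proof.
move=> Ssym psd /eigenvalueP [v hv v0].
have h : S *m v^T = a *: v^T by rewrite -[S]Ssym -trmx_mul hv linearZ.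
have := psd v^T; rewrite /qf h dotZr => ha.
have hn : 0 < nn v^T.
  rewrite lt_def nn_ge0 andbT; apply/eqP => /nn_eq0 /(congr1 trmx).
  by rewrite trmxK trmx0; apply/eqP.
by rewrite -(pmulr_lge0 _ hn).
Qed.

Lemma Kd_lemma n (S : 'M[R]_n.+1) : S^T = S -> (forall v, 0 <= qf S v) ->
  exists K, 0 < K /\ forall v, qf S v <= K * nn (S *m v).
Proof.
move=> Ssym psd; have [d [hd hv]] := Spec.real_spectral Ssym.
have d0 i : 0 <= d 0 i by apply: (eig_ge0 Ssym psd (hd i)).
pose K := 1 + \sum_i (d 0 i)^-1.
have K1 : 1 <= K by rewrite lerDl sumr_ge0 // => i _; rewrite invr_ge0.
exists K; split; first by apply: lt_le_trans K1.
move=> v; have [w [w0 hw]] := hv v.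
have e1 : qf S v = \sum_i d 0 i * w i.
  have := hw 'X; rewrite horner_mx_X => h.
  by rewrite /qf /dot mulmxA h; apply eq_bigr => i _; rewrite hornerX.
have e2 : nn (S *m v) = \sum_i (d 0 i * d 0 i) * w i.
  have := hw ('X * 'X); rewrite rmorphM /= horner_mx_X => h.
  rewrite nn_qf Ssym /qf /dot mulmxA mulmxE h; apply eq_bigr => i _.
  by rewrite hornerM hornerX.
rewrite e1 e2 mulr_sumr; apply: ler_sum => i _; rewrite mulrA ler_wpM2r //.
have [->|di] := eqVneq (d 0 i) 0; first by rewrite !mul0r mulr0.
have dpos : 0 < d 0 i by rewrite lt_def di d0.
have Kge : (d 0 i)^-1 <= K.
  apply: (le_trans _ (_ : \sum_j (d 0 j)^-1 <= K)); last by rewrite lerDr ler01.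
  rewrite (bigD1 i) //= lerDl.
  by rewrite sumr_ge0 // => j _; rewrite invr_ge0.
have := ler_wpM2r (ltW (mulr_gt0 dpos dpos)) Kge.
by rewrite mulrA mulVf // mul1r.
Qed.

End LA.


Section Step.
Variable R : realType.

Lemma diag_lb n (dv : 'rV[R]_n) m (v : 'cV[R]_n) : (forall i, m <= dv 0 i) ->
  m * nn v <= dot v (diag_mx dv *m v).
Proof.
move=> h; rewrite /nn !dotE mulr_sumr; apply: ler_sum => i _.
rewrite mul_diag_mx mxE [X in _ <= X]mulrCA; apply: ler_wpM2r => //.
by rewrite -expr2 sqr_ge0.
Qed.

Lemma diag_ub n (dv : 'rV[R]_n) m L (v : 'cV[R]_n) : 0 <= m -> (forall i, m <= dv 0 i <= L) ->
  nn (diag_mx dv *m v) <= L ^+ 2 * nn v.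
Proof.
move=> m0 h; rewrite /nn !dotE mulr_sumr; apply: ler_sum => i _.
rewrite mul_diag_mx mxE mulrACA -expr2; apply: ler_wpM2r; first by rewrite -expr2 sqr_ge0.
have /andP [h1 h2] := h i; rewrite ler_sqr ?nnegrE //.
  by apply: le_trans h1.
by apply: le_trans (le_trans h1 h2).
Qed.


Lemma step_lemma n eps (A : 'M[R]_(eps, n)) (B Mm : 'M[R]_n)
  (alpha beta m L eta rhoAA cs Kd KM KB KAA : R) :
  0 < alpha -> 0 < beta -> 0 < eta -> 0 < m -> m <= L ->
  alpha * L ^+ 2 / eta < cs ->
  beta * rhoAA < 2 * m - eta ->
  Mm^T = Mm ->
  (forall u, cs * nn u <= qf Mm u) ->
  0 <= KM -> (forall u, nn (Mm *m u) <= KM * nn u) ->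
  0 <= KB -> (forall u, nn (B *m u) <= KB * nn u) ->
  0 <= KAA -> (forall u, nn (A^T *m (A *m u)) <= KAA * nn u) ->
  (forall u, nn (A *m u) <= rhoAA * nn u) ->
  (forall u, 0 <= qf B u) ->
  0 < Kd -> (forall y, nn (A *m y) <= Kd * nn (A^T *m (A *m y))) ->
  exists delta, 0 < delta /\
   forall (e e1 : 'cV_n) (mu mu1 : 'cV_eps) (y : 'cV_n) (dv : 'rV_n),
    (forall i, m <= dv 0 i <= L) ->
    Mm *m (e1 - e) + alpha *: (B *m e1) + alpha *: (diag_mx dv *m e)
      + alpha *: (A^T *m mu) = 0 ->
    mu1 = mu + beta *: (A *m e1) ->
    mu1 = A *m y ->
    qf Mm e1 + alpha / beta * nn mu1 <= (1 + delta)^-1 * (qf Mm e + alpha / beta * nn mu).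
Proof.
move=> a0 b0 eta0 m0 mL hcs hb Msym hMlo KM0 hKM KB0 hKB KAA0 hKAA hrho hBpsd Kd0 hKd.
have L0 : 0 < L by apply: lt_le_trans mL.
pose c1 := cs - alpha * L ^+ 2 / eta.
pose c2 := alpha * (2 * m - eta - beta * rhoAA).
have c10 : 0 < c1 by rewrite /c1 subr_gt0.
have c20 : 0 < c2 by rewrite /c2 mulr_gt0 //; lra.
pose c := Num.min c1 c2.
have c0 : 0 < c by rewrite lt_min c10 c20.
pose K0 := 1 + (1 + KM) / 2 + alpha / beta * Kd *
   (8 * KM / alpha ^+ 2 + 8 * L ^+ 2 + 8 * KB + 8 * beta ^+ 2 * KAA).
have K00 : 0 < K0.
  have t1 : 0 <= (1 + KM) / 2 by rewrite divr_ge0 // addr_ge0.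
  have t2 : 0 <= alpha / beta * Kd *
      (8 * KM / alpha ^+ 2 + 8 * L ^+ 2 + 8 * KB + 8 * beta ^+ 2 * KAA).
    apply: mulr_ge0; first by apply: mulr_ge0; [apply: divr_ge0; exact: ltW|exact: ltW].
    have s1 : 0 <= 8 * KM / alpha ^+ 2 by apply: divr_ge0; [apply: mulr_ge0|apply: sqr_ge0].
    have s2 : 0 <= L ^+ 2 := sqr_ge0 _.
    have s3 : 0 <= beta ^+ 2 * KAA by apply: mulr_ge0 => //; apply: sqr_ge0.
    lra.
  rewrite /K0; lra.
exists (c / K0); split; first by rewrite divr_gt0.
move=> e e1 mu mu1 y dv hdv EQ hmu1 hy.
pose u := e1 - e.
pose D := diag_mx dv.
have ee : e = e1 - u by rewrite /u subKr.
rewrite -/u in EQ; clearbody u.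
pose Nu := nn u; pose Ne1 := nn e1.
have Nu0 : 0 <= Nu := nn_ge0 _.
have Ne10 : 0 <= Ne1 := nn_ge0 _.
have EQ1 : dot e1 (Mm *m u) + alpha * qf B e1 + alpha * dot e1 (D *m e)
     + alpha * dot (A *m e1) mu = 0.
  have := congr1 (dot e1) EQ; rewrite dot0r !dotDr !dotZr.
  by rewrite [dot e1 (A^T *m mu)]dot_mulmx trmxK.
have EQ2 : alpha / beta * nn mu1 = alpha / beta * nn mu + 2 * alpha * dot (A *m e1) mu
     + alpha * beta * nn (A *m e1).
  rewrite hmu1 nnD nnZ dotZr (dotC mu); field; exact: lt0r_neq0.
have EQ3 : qf Mm e = qf Mm e1 - 2 * dot e1 (Mm *m u) + qf Mm u.
  rewrite ee /qf mulmxBr !dotBl !dotBr [dot u (Mm *m e1)]dot_mulmx Msym (dotC _ e1).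
  ring.
have EQ4 : dot e1 (D *m e) = dot e1 (D *m e1) - dot e1 (D *m u).
  by rewrite ee mulmxBr dotBr.
have I2 : m * Ne1 <= dot e1 (D *m e1) by apply: diag_lb => i; case/andP: (hdv i).
have I3 : 2 * dot e1 (D *m u) <= eta * Ne1 + eta^-1 * nn (D *m u) by apply: dot_le.
have I3b : nn (D *m u) <= L ^+ 2 * Nu by apply: diag_ub (ltW m0) hdv.
have I4 := hMlo u.
have I5 := hrho e1.
have I6 := hBpsd e1.
have lower : c1 * Nu + c2 * Ne1 <=
    (qf Mm e + alpha / beta * nn mu) - (qf Mm e1 + alpha / beta * nn mu1).
  rewrite EQ2 EQ3.
  have J1 : alpha * (m * Ne1) <= alpha * dot e1 (D *m e1) by rewrite ler_wpM2l // ltW.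
  have J2 : alpha * (2 * dot e1 (D *m u)) <= alpha * (eta * Ne1 + eta^-1 * nn (D *m u)).
    by rewrite ler_wpM2l // ltW.
  have J3 : alpha * eta^-1 * nn (D *m u) <= alpha * eta^-1 * (L ^+ 2 * Nu).
    by rewrite ler_wpM2l // mulr_ge0 // ?invr_ge0 ltW.
  have J4 : alpha * beta * nn (A *m e1) <= alpha * beta * (rhoAA * Ne1).
    by rewrite ler_wpM2l // mulr_ge0 // ltW.
  have J5 : 0 <= alpha * qf B e1 by rewrite mulr_ge0 // ltW.
  have EQ1' := EQ1; rewrite EQ4 in EQ1'.
  rewrite /c1 /c2 /Nu /Ne1 in J1 J2 J3 J4 I4 *.
  have -> : alpha * L ^+ 2 / eta = alpha * eta^-1 * L ^+ 2 by rewrite mulrAC.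
  nra.
pose S := 8 * KM / alpha ^+ 2 + 8 * L ^+ 2 + 8 * KB + 8 * beta ^+ 2 * KAA.
have hAmu : alpha *: (A^T *m mu) = - (Mm *m u + alpha *: (B *m e1) + alpha *: (D *m e)).
  by apply/eqP; rewrite -addr_eq0 addrC EQ.
have hZ : alpha *: (A^T *m mu1) = - (Mm *m u + alpha *: (B *m e1) + alpha *: (D *m e))
    + (alpha * beta) *: (A^T *m (A *m e1)).
  by rewrite hmu1 mulmxDr scalerDr hAmu -scalemxAr scalerA.
have hDe : nn (D *m e) <= 2 * (L ^+ 2 * Ne1) + 2 * (L ^+ 2 * Nu).
  rewrite ee mulmxBr; apply: (le_trans (nnD_le _ _)); rewrite nnN.
  have := diag_ub e1 (ltW m0) hdv; have := diag_ub u (ltW m0) hdv; rewrite /Nu /Ne1; lra.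
have hZb : alpha ^+ 2 * nn (A^T *m mu1) <= alpha ^+ 2 * (S * (Nu + Ne1)).
  rewrite -nnZ hZ; apply: (le_trans (nnD_le _ _)); rewrite nnN nnZ.
  have k1 := nnD_le (Mm *m u + alpha *: (B *m e1)) (alpha *: (D *m e)).
  have k2 := nnD_le (Mm *m u) (alpha *: (B *m e1)).
  rewrite !nnZ in k1 k2.
  have k3 := hKM u; have k4 := hKB e1; have k5 := hKAA e1.
  have a2 : 0 < alpha ^+ 2 by rewrite exprn_gt0.
  have k6 : alpha ^+ 2 * nn (B *m e1) <= alpha ^+ 2 * (KB * Ne1) by rewrite ler_wpM2l // ltW.
  have k7 : alpha ^+ 2 * nn (D *m e) <= alpha ^+ 2 * (2 * (L ^+ 2 * Ne1) + 2 * (L ^+ 2 * Nu)).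
    by rewrite ler_wpM2l // ltW.
  have k8 : (alpha * beta) ^+ 2 * nn (A^T *m (A *m e1)) <= (alpha * beta) ^+ 2 * (KAA * Ne1).
    by rewrite ler_wpM2l // sqr_ge0.
  have k9 : alpha ^+ 2 * (8 * KM / alpha ^+ 2 * Nu) = 8 * KM * Nu.
    by field; rewrite lt0r_neq0.
  have k10 : 2 * ((alpha * beta) ^+ 2 * (KAA * Ne1)) <= alpha ^+ 2 * (8 * beta ^+ 2 * KAA * Ne1).
    have t0 : 0 <= alpha ^+ 2 * beta ^+ 2 * KAA * nn e1.
      apply: mulr_ge0; last exact: nn_ge0.
      by apply: mulr_ge0 => //; apply: mulr_ge0; apply: sqr_ge0.
    have -> : (alpha * beta) ^+ 2 * (KAA * Ne1) = alpha ^+ 2 * beta ^+ 2 * KAA * nn e1.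
      by rewrite exprMn /Ne1; ring.
    have -> : alpha ^+ 2 * (8 * beta ^+ 2 * KAA * Ne1) = 8 * (alpha ^+ 2 * beta ^+ 2 * KAA * nn e1).
      by rewrite /Ne1; ring.
    lra.
  rewrite /S /Nu /Ne1 in k3 k4 k5 k6 k7 k8 k9 k10 *.
  have KB' : 0 <= alpha ^+ 2 * (KB * nn e1).
    by apply: mulr_ge0; [exact: ltW | apply: mulr_ge0 => //; exact: nn_ge0].
  have L2 : 0 <= alpha ^+ 2 * (L ^+ 2 * nn e1).
    by apply: mulr_ge0; [exact: ltW | apply: mulr_ge0; [exact: sqr_ge0 | exact: nn_ge0]].
  have L3 : 0 <= alpha ^+ 2 * (L ^+ 2 * nn u).
    by apply: mulr_ge0; [exact: ltW | apply: mulr_ge0; [exact: sqr_ge0 | exact: nn_ge0]].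
  have -> : alpha ^+ 2 *
    ((8 * KM / alpha ^+ 2 + 8 * L ^+ 2 + 8 * KB + 8 * beta ^+ 2 * KAA) * (nn u + nn e1))
    = 8 * KM * nn u + 8 * KM * nn e1 + 4 * (alpha ^+ 2 * (2 * (L ^+ 2 * nn e1) + 2 * (L ^+ 2 * nn u)))
      + 8 * (alpha ^+ 2 * (KB * nn e1)) + alpha ^+ 2 * (8 * beta ^+ 2 * KAA * nn e1)
      + 8 * (alpha ^+ 2 * (KB * nn u)) + 8 * (alpha ^+ 2 * beta ^+ 2 * KAA * nn u).
    by field; rewrite lt0r_neq0.
  have KMe : 0 <= KM * nn e1 by apply: mulr_ge0 => //; exact: nn_ge0.
  have KBu : 0 <= alpha ^+ 2 * (KB * nn u).
    by apply: mulr_ge0; [exact: ltW | apply: mulr_ge0 => //; exact: nn_ge0].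
  have KAu : 0 <= alpha ^+ 2 * beta ^+ 2 * KAA * nn u.
    apply: mulr_ge0; last exact: nn_ge0.
    by apply: mulr_ge0 => //; apply: mulr_ge0; apply: sqr_ge0.
  lra.
have a2 : 0 < alpha ^+ 2 by rewrite exprn_gt0.
rewrite ler_pM2l // in hZb.
have hV1 : qf Mm e1 + alpha / beta * nn mu1 <= K0 * (Nu + Ne1).
  have q1 := dot_le e1 (Mm *m e1) ltr01; rewrite invr1 in q1.
  have q2 := hKM e1.
  have q3 : nn mu1 <= Kd * nn (A^T *m mu1) by rewrite hy; exact: hKd.
  have ab : 0 <= alpha / beta by rewrite divr_ge0 ?ltW.
  have q4 : alpha / beta * nn mu1 <= alpha / beta * (Kd * nn (A^T *m mu1)).
    by rewrite ler_wpM2l.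
  have q5 : alpha / beta * (Kd * nn (A^T *m mu1)) <= alpha / beta * (Kd * (S * (Nu + Ne1))).
    by rewrite ler_wpM2l // ler_wpM2l // ltW.
  have -> : K0 * (Nu + Ne1) = (Nu + Ne1) + (1 + KM) / 2 * (Nu + Ne1)
     + alpha / beta * (Kd * (S * (Nu + Ne1))) by rewrite /K0 /S; ring.
  have q6 : 0 <= (1 + KM) / 2 * Nu by rewrite mulr_ge0 // divr_ge0 // addr_ge0.
  rewrite /qf /Ne1 /Nu in q5 q6 Ne10 Nu0 *; lra.
have F0 : 0 <= c / K0 by rewrite divr_ge0 ?ltW.
have F1 : c / K0 * (qf Mm e1 + alpha / beta * nn mu1) <= c * (Nu + Ne1).
  have := ler_wpM2l F0 hV1; rewrite mulrA divfK //; exact: lt0r_neq0.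
have F2 : c * (Nu + Ne1) <= c1 * Nu + c2 * Ne1.
  have h1 : c <= c1 by rewrite ge_min lexx.
  have h2 : c <= c2 by rewrite ge_min lexx orbT.
  have := ler_wpM2r Nu0 h1; have := ler_wpM2r Ne10 h2; lra.
rewrite ler_pdivlMl; last by rewrite ltr_wpDr ?divr_ge0 ?ltW.
lra.
Qed.

Lemma mvt_bound (g : R -> R) m L : (forall x, derivable g x 1) ->
  (forall x, m <= derive1 g x <= L) ->
  forall a b, exists c, m <= c <= L /\ g b - g a = c * (b - a).
Proof.
move=> dg hb.
have key a b : a < b -> exists c, m <= c <= L /\ g b - g a = c * (b - a).
  move=> ab.
  have [c _ hc] := @MVT R g (derive1 g) a b ab
    (fun x _ => ltac:(rewrite derive1E; exact: derivableP))
    (derivable_within_continuous (fun x _ => dg x)).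
  by exists (derive1 g c); split.
move=> a b; case: (ltgtP a b) => [ab|ba|<-].
- exact: key.
- have [c [hc e]] := key _ _ ba; exists c; split => //.
  by rewrite -opprB e -mulrN opprB.
- by exists (derive1 g a); split; rewrite // !subrr mulr0.
Qed.

End Step.


Section BF.
Variable R : realType.

Lemma geo_sum (b : R) T : (1 - b) * \sum_(t < T) b ^+ t = 1 - b ^+ T.
Proof.
elim: T => [|T IH]; first by rewrite big_ord0 mulr0 expr0 subrr.
by rewrite big_ord_recr /= mulrDr IH exprSr; ring.
Qed.

Lemma sum_ge1 (a : R) T : 0 <= a -> (0 < T)%N -> 1 <= \sum_(t < T) a ^+ t.
Proof.
move=> a0; case: T => // T _; rewrite big_ord_recl expr0 lerDl.
by apply: sumr_ge0 => i _; apply: exprn_ge0.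
Qed.

Lemma geo_ineq (a b : R) T : 0 <= b -> b <= a ->
  b ^+ T * \sum_(t < T) a ^+ t <= a ^+ T * \sum_(t < T) b ^+ t.
Proof.
move=> b0 ba; rewrite !mulr_sumr; apply: ler_sum => -[t tT1] _ /=.
have tT : (t <= T)%N by apply: ltnW.
move: (T - t)%N (subnK tT) => k <-.
rewrite !exprD mulrAC [X in _ <= X]mulrAC -!mulrA.
rewrite [b ^+ t * _]mulrC; apply: ler_wpM2r.
  by apply: mulr_ge0; apply: exprn_ge0 => //; apply: le_trans ba.
by apply: lerXn2r; rewrite ?nnegrE // (le_trans b0).
Qed.

Lemma cs_ineq (a b : R) T : 0 < b -> b <= a -> (0 < T)%N ->
  b ^+ T / (\sum_(t < T) b ^+ t) * ((\sum_(t < T) a ^+ t) * (\sum_(t < T) a ^+ t))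
   <= a ^+ T * \sum_(t < T) a ^+ t.
Proof.
move=> b0 ba T0.
have SA : 1 <= \sum_(t < T) a ^+ t by apply: sum_ge1 => //; apply: le_trans ba; apply: ltW.
have SB : 1 <= \sum_(t < T) b ^+ t by apply: sum_ge1 => //; apply: ltW.
have SB0 : 0 < \sum_(t < T) b ^+ t by apply: lt_le_trans SB.
have SA0 : 0 < \sum_(t < T) a ^+ t by apply: lt_le_trans SA.
have := geo_ineq T (ltW b0) ba.
set sa := \sum_(t < T) a ^+ t; set sb := \sum_(t < T) b ^+ t => h.
have -> : b ^+ T / sb * (sa * sa) = (b ^+ T * sa) * (sa / sb) by field; rewrite gt_eqF.
have -> : a ^+ T * sa = (a ^+ T * sb) * (sa / sb) by field; rewrite gt_eqF.
by apply: ler_wpM2r => //; apply: divr_ge0; apply: ltW.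
Qed.

Lemma cs_gt (alpha rhoB L eta : R) T : 0 < alpha -> 0 < rhoB -> 0 < eta -> 0 < L -> (0 < T)%N ->
  alpha < (1 - powR (L ^+ 2 / (L ^+ 2 + eta * rhoB)) (T%:R)^-1) / rhoB ->
  alpha * L ^+ 2 / eta <
    (1 - alpha * rhoB) ^+ T / (\sum_(t < T) (1 - alpha * rhoB) ^+ t).
Proof.
move=> a0 r0 e0 L0 T0 ha.
set q := L ^+ 2 / (L ^+ 2 + eta * rhoB).
have den0 : 0 < L ^+ 2 + eta * rhoB by rewrite addr_gt0 ?exprn_gt0 ?mulr_gt0.
have q0 : 0 <= q by rewrite divr_ge0 ?sqr_ge0 ?ltW.
set b := 1 - alpha * rhoB.
set r := powR q (T%:R)^-1.
have rb : r < b by move: ha; rewrite ltr_pdivlMr // -/r => h; rewrite /b; lra.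
have r0' : 0 <= r := powR_ge0 _ _.
have rT : r ^+ T = q.
  rewrite /r -powR_mulrn // -powRrM mulVf ?powRr1 //.
  by rewrite pnatr_eq0 -lt0n.
have qb : q < b ^+ T by rewrite -rT ltrXn2r // -lt0n.
have b0 : 0 < b by apply: le_lt_trans rb.
have ab : 0 < alpha * rhoB by rewrite mulr_gt0.
have hs := geo_sum b T; rewrite /b opprB addrC subrK -/b in hs.
set sb := \sum_(t < T) b ^+ t in hs *.
have sb0 : 0 < sb by apply: lt_le_trans (@sum_ge1 b T (ltW b0) T0).
rewrite ltr_pdivlMr // -(ltr_pM2r ab) -(ltr_pM2r e0).
have -> : alpha * L ^+ 2 / eta * sb * (alpha * rhoB) * eta = alpha * L ^+ 2 * (alpha * rhoB * sb).
  by field; rewrite gt_eqF.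
rewrite hs.
have : q * (L ^+ 2 + eta * rhoB) < b ^+ T * (L ^+ 2 + eta * rhoB) by rewrite ltr_pM2r.
rewrite /q divfK ?gt_eqF // => h.
have : alpha * (L ^+ 2 * (1 - b ^+ T)) < alpha * (b ^+ T * (alpha * rhoB) * eta / alpha).
  rewrite ltr_pM2l //. 
  have -> : b ^+ T * (alpha * rhoB) * eta / alpha = b ^+ T * rhoB * eta by field; rewrite gt_eqF.
  lra.
have -> : alpha * (b ^+ T * (alpha * rhoB) * eta / alpha) = b ^+ T * (alpha * rhoB) * eta.
  by field; rewrite gt_eqF.
lra.
Qed.

Definition pW (alpha : R) : {poly R} := 1 - alpha *: 'X.

Lemma pW_eval alpha s : (pW alpha).[s] = 1 - alpha * s.
Proof. by rewrite /pW !hornerE. Qed.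

Lemma pC_eval alpha T s : (\sum_(t < T) pW alpha ^+ t).[s] = \sum_(t < T) (1 - alpha * s) ^+ t.
Proof. by rewrite horner_sum; apply: eq_bigr => t _; rewrite horner_exp pW_eval. Qed.

Lemma geo_sum_r (Rg : pzRingType) (x : Rg) T : (\sum_(t < T) x ^+ t) * (1 - x) = 1 - x ^+ T.
Proof.
elim: T => [|T IH]; first by rewrite big_ord0 mul0r expr0 subrr.
rewrite big_ord_recr /= mulrDl IH mulrBr mulr1 -exprSr.
by rewrite addrA subrK.
Qed.

Section Mat.
Variable n : nat.
Variable B : 'M[R]_n.+1.
Variable alpha : R.

Lemma horner_pW : horner_mx B (pW alpha) = 1%:M - alpha *: B.
Proof. by rewrite /pW rmorphB /= rmorph1 linearZ /= horner_mx_X. Qed.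

Lemma horner_pC T : horner_mx B (\sum_(t < T) pW alpha ^+ t) = Cmat B alpha T.
Proof. by rewrite rmorph_sum; apply: eq_bigr => t _; rewrite rmorphXn /= horner_pW. Qed.

Lemma Mm_facts rhoB T :
  B^T = B -> (forall v, 0 <= qf B v) -> (forall s, eigenvalue B s -> s <= rhoB) ->
  0 < alpha -> 0 < 1 - alpha * rhoB -> (0 < T)%N ->
  [/\ Cmat B alpha T \in unitmx, (Mmat B alpha T)^T = Mmat B alpha T,
      invmx (Cmat B alpha T) = Mmat B alpha T + alpha *: B &
      forall u, (1 - alpha * rhoB) ^+ T / (\sum_(t < T) (1 - alpha * rhoB) ^+ t) * nn u
                <= qf (Mmat B alpha T) u].
Proof.
move=> Bsym Bpsd Brho a0 b0 T0.
set b := 1 - alpha * rhoB in b0 *.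
have eigr s : eigenvalue B s -> b <= 1 - alpha * s /\ 1 - alpha * s <= 1.
  move=> hs; have s0 := eig_ge0 Bsym Bpsd hs; have sr := Brho s hs.
  split; first by rewrite lerB // ler_wpM2l // ltW.
  by rewrite lerBlDr lerDl mulr_ge0 // ltW.
set W := 1%:M - alpha *: B.
set Cm := Cmat B alpha T.
have WT : W^T = W by rewrite /W linearB linearZ /= trmx1 Bsym.
have WtT t : (W ^+ t)^T = W ^+ t.
  elim: t => [|t IH]; first by rewrite expr0 trmx1.
  rewrite exprSr; change ((W ^+ t *m W)^T = W ^+ t *m W); rewrite trmx_mul IH WT.
  by change (W * W ^+ t = W ^+ t * W); rewrite -exprS exprSr.
have CmT : Cm^T = Cm.
  by rewrite /Cm /Cmat raddf_sum; apply: eq_bigr => t _; exact: (WtT t).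
have CmE : Cm = horner_mx B (\sum_(t < T) pW alpha ^+ t) by rewrite horner_pC.
have WE : W = horner_mx B (pW alpha) by rewrite horner_pW.
have Clow y : nn y <= qf Cm y.
  rewrite -qf1 -(horner_mx_C B 1) CmE; apply: poly_ineq => // s hs.
  rewrite hornerC pC_eval; apply: sum_ge1 => //.
  by have [h1 _] := eigr s hs; apply: le_trans h1; apply: ltW.
have Cu : Cm \in unitmx.
  rewrite unitmxE unitfE; apply/det0P => -[v v0 hv].
  have hy : Cm *m v^T = 0 by rewrite -CmT -trmx_mul hv trmx0.
  have := Clow v^T; rewrite /qf hy dot0r => hle.
  have : nn v^T = 0 by apply/le_anti; rewrite hle nn_ge0.
  move/nn_eq0/(congr1 trmx); rewrite trmxK trmx0 => v00.
  by move: v0; rewrite v00 eqxx.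
have MmE : Mmat B alpha T = invmx Cm *m W ^+ T by [].
have WTC : W ^+ T *m Cm = Cm *m W ^+ T.
  change (GRing.comm (W ^+ T) Cm); apply: commr_sum => t _.
  by rewrite /GRing.comm -!exprD addnC.
have tele : Cm *m (alpha *: B) = 1%:M - W ^+ T.
  have -> : alpha *: B = 1 - W by rewrite /W opprB addrC subrK.
  exact: geo_sum_r.
have Cinv : invmx Cm = Mmat B alpha T + alpha *: B.
  have h : Cm *m (Mmat B alpha T + alpha *: B) = 1%:M.
    by rewrite mulmxDr tele MmE mulmxA mulmxV // mul1mx addrC subrK.
  by rewrite -[RHS](mulKmx Cu) h mulmx1.
have Msym : (Mmat B alpha T)^T = Mmat B alpha T.
  rewrite MmE trmx_mul trmx_inv CmT WtT.
  rewrite -[in LHS](mulKmx Cu (W ^+ T)) -WTC.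
  by rewrite -mulmxA -[W ^+ T *m Cm *m _]mulmxA mulmxV // mulmx1.
split => // u.
pose y := invmx Cm *m u.
have hu : u = Cm *m y by rewrite /y mulKVmx.
have e1 : qf (Mmat B alpha T) u = qf (W ^+ T *m Cm) y.
  rewrite hu /qf dotC dot_mulmx dotC CmT MmE !mulmxA mulmxV // mul1mx.
  by [].
have e2 : nn u = qf (Cm *m Cm) y by rewrite hu nn_qf CmT.
rewrite e1 e2 -qfZl.
have -> : W ^+ T *m Cm = horner_mx B (pW alpha ^+ T * \sum_(t < T) pW alpha ^+ t).
  by rewrite rmorphM rmorphXn /= -WE -CmE.
have -> : (b ^+ T / \sum_(t < T) b ^+ t) *: (Cm *m Cm)
   = horner_mx B ((b ^+ T / \sum_(t < T) b ^+ t) *: ((\sum_(t < T) pW alpha ^+ t) * \sum_(t < T) pW alpha ^+ t)).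
  by rewrite linearZ rmorphM /= -CmE.
apply: poly_ineq => // s hs.
rewrite hornerZ !hornerM horner_exp pW_eval !pC_eval.
have [h1 h2] := eigr s hs.
exact: cs_ineq.
Qed.

End Mat.

End BF.


Section Main.
Variable R : realType.

Lemma iter_formula n (W : 'M[R]_n.+1) (alpha : R) (c x : 'cV[R]_n.+1) T :
  iter T (fun y => W *m y - alpha *: c) x =
  W ^+ T *m x - alpha *: ((\sum_(t < T) W ^+ t) *m c).
Proof.
elim: T => [|T IH]; first by rewrite big_ord0 expr0 mul1mx mul0mx scaler0 subr0.
rewrite iterS IH big_ord_recl expr0 mulmxBr mulmxA -scalemxAr mulmxDl mul1mx.
have hs : \sum_(i < T) W ^+ lift ord0 i = W *m \sum_(t < T) W ^+ t.
  by rewrite mulmxE mulr_sumr; apply: eq_bigr => i _; rewrite /= exprS.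
rewrite hs exprS -[W * W ^+ T]/(W *m W ^+ T) -!mulmxA.
by rewrite scalerDr opprD addrA addrAC.
Qed.


Lemma GCdist2E n eps (B : 'M[R]_n) alpha beta T (x xs : 'cV[R]_n) (lam ls : 'cV[R]_eps) :
  GCdist2 B alpha beta T (x, lam) (xs, ls) =
  qf (Mmat B alpha T) (x - xs) + alpha / beta * nn (lam - ls).
Proof.
rewrite /GCdist2 /wnorm2 /GCmat /= tr_col_mx mul_row_block !mulmx0 addr0 add0r.
rewrite mul_row_col mxE; congr (_ + _); first by rewrite /qf /dot mulmxA.
by rewrite mul_mx_scalar -scalemxAl mxE.
Qed.

Lemma zm1 (V : zmodType) (p a q : V) : p - a - q - (p - q) = - a.
Proof. by rewrite opprB addrA subrK addrAC subrr add0r. Qed.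

Lemma key_eq n eps (A : 'M[R]_(eps, n.+1)) (B Mm Cm W D : 'M[R]_n.+1) (alpha : R) T
  (x x1 xs g gs : 'cV[R]_n.+1) (lam ls : 'cV[R]_eps) :
  Cm \in unitmx -> Mm = invmx Cm *m W ^+ T -> invmx Cm = Mm + alpha *: B ->
  W ^+ T *m xs = xs ->
  x1 = W ^+ T *m x - alpha *: (Cm *m (g + A^T *m lam)) ->
  g - gs = D *m (x - xs) ->
  gs + A^T *m ls = 0 ->
  Mm *m ((x1 - xs) - (x - xs)) + alpha *: (B *m (x1 - xs)) + alpha *: (D *m (x - xs))
    + alpha *: (A^T *m (lam - ls)) = 0.
Proof.
move=> Cu hM hinv hxs hx1 hg hgs.
set r := g + A^T *m lam.
have h1 : Mm *m ((x1 - xs) - (x - xs)) + alpha *: (B *m (x1 - xs)) = - (alpha *: r).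
  have -> : Mm *m ((x1 - xs) - (x - xs)) + alpha *: (B *m (x1 - xs))
      = invmx Cm *m (x1 - xs) - Mm *m (x - xs).
    by rewrite hinv mulmxDl -scalemxAl mulmxBr addrAC.
  rewrite hx1 hM !mulmxBr -scalemxAr mulKmx // -[_ *m W ^+ T *m xs]mulmxA hxs mulmxA.
  exact: zm1.
have h2 : D *m (x - xs) + A^T *m (lam - ls) = r.
  have hgs' : gs = - (A^T *m ls) by apply/eqP; rewrite -addr_eq0 hgs.
  by rewrite -hg mulmxBr hgs' opprK addrACA subrr addr0.
by rewrite -addrA -scalerDr h2 h1 addNr.
Qed.

End Main.

Unset Implicit Arguments.
Theorem theorem3p18 (R : realType) (n eps : nat) (E : 'I_eps -> 'I_n * 'I_n)
  (f : 'I_n -> R -> R) (m L : R) (B : 'M[R]_n)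
  (xs : 'cV[R]_n) (ls : 'cV[R]_eps) (alpha beta eta4 rhoAA rhoB : R) (T : nat)
  (x0 : 'cV[R]_n) :
  simple_graph E -> connected_graph E ->
  0 < m -> m <= L ->
  (forall i x, derivable (f i) x 1) ->
  (forall i x, derivable (derive1 (f i)) x 1) ->
  (forall i x, m <= derive1 (derive1 (f i)) x <= L) ->
  B^T = B ->
  (forall v : 'cV[R]_n, 0 <= wnorm2 B v) ->
  (forall v : 'cV[R]_n, B *m v = 0 <-> incidence R E *m v = 0) ->
  (forall i j, i != j -> B i j != 0 -> adj E i j) ->
  incidence R E *m xs = 0 ->
  (forall x : 'cV[R]_n, incidence R E *m x = 0 -> fsum f xs <= fsum f x) ->
  (forall x : 'cV[R]_n, incidence R E *m x = 0 -> fsum f x <= fsum f xs -> x = xs) ->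
  gradf f xs + (incidence R E)^T *m ls = 0 ->
  B *m xs = 0 ->
  (exists u : 'cV[R]_n, ls = incidence R E *m u) ->
  is_largest_eig ((incidence R E)^T *m incidence R E) rhoAA ->
  is_largest_eig B rhoB ->
  (0 < T)%N ->
  0 < eta4 < 2 * m ->
  0 < beta < (2 * m - eta4) / rhoAA ->
  0 < alpha < (1 - powR (L ^+ 2 / (L ^+ 2 + eta4 * rhoB)) (T%:R)^-1) / rhoB ->
  exists deltaC : R, 0 < deltaC /\
    forall k : nat,
      GCdist2 B alpha beta T (flexpd f (incidence R E) B alpha beta T x0 k.+1) (xs, ls)
      <= (1 + deltaC)^-1 *
         GCdist2 B alpha beta T (flexpd f (incidence R E) B alpha beta T x0 k) (xs, ls).

Proof.
move=> sg cg m0 mL df ddf hdd Bsym Bpsd Bker Badj Axs xsmin xsuniq KKT Bxs lscol hAA hB T0.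
move=> /andP [eta0 etam] /andP [b0 bub] /andP [a0 aub].
destruct n as [|n].
  exfalso; have [ev _] := hB; move/eigenvalueP: ev => [v _ v0].
  move: v0; have -> : v = 0 by apply/matrixP => i [j hj].
  by rewrite eqxx.
set A := incidence R E.
have Bq v : 0 <= qf B v by have := Bpsd v; rewrite /wnorm2 /qf /dot mulmxA.
have [rB_eig rB_max] := hB.
have rB0 : 0 <= rhoB := eig_ge0 Bsym Bq rB_eig.
have rB : 0 < rhoB.
  rewrite lt_def rB0 andbT; apply/eqP => h; move: aub; rewrite h invr0 mulr0; lra.
pose S := A^T *m A.
have Ssym : S^T = S by rewrite /S trmx_mul trmxK.
have Sq v : 0 <= qf S v by rewrite -nn_qf nn_ge0.
have [rA_eig rA_max] := hAA.
have rA0 : 0 <= rhoAA := eig_ge0 Ssym Sq rA_eig.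
have rA : 0 < rhoAA.
  rewrite lt_def rA0 andbT; apply/eqP => h; move: bub; rewrite h invr0 mulr0; lra.
have L0 : 0 < L by apply: lt_le_trans mL.
have pw0 := powR_ge0 (L ^+ 2 / (L ^+ 2 + eta4 * rhoB)) (T%:R)^-1.
have bpos : 0 < 1 - alpha * rhoB.
  by move: aub; rewrite ltr_pdivlMr // => h; lra.
have [Cu Msym Cinv hMlo] := Mm_facts Bsym Bq rB_max a0 bpos T0.
have hcs := cs_gt a0 rB eta0 L0 T0 aub.
have hb : beta * rhoAA < 2 * m - eta4 by move: bub; rewrite ltr_pdivlMr.
have [KM [KM0 hKM]] := bound_any (Mmat B alpha T).
have [KB [KB0 hKB]] := bound_any B.
have [KAA [KAA0 hKAA']] := bound_any S.
have hKAA u : nn (A^T *m (A *m u)) <= KAA * nn u by rewrite mulmxA; exact: hKAA'.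
have hrho u : nn (A *m u) <= rhoAA * nn u.
  have h := @poly_ineq R n S rhoAA%:P 'X Ssym.
  rewrite horner_mx_X horner_mx_C in h.
  rewrite nn_qf; have := h _ u; rewrite /qf mul_scalar_mx dotZr; apply => a ha.
  by rewrite hornerX hornerC; apply: rA_max.
have [Kd [Kd0 hKd']] := Kd_lemma Ssym Sq.
have hKd y : nn (A *m y) <= Kd * nn (A^T *m (A *m y)).
  by rewrite nn_qf -/S mulmxA -/S; apply: hKd'.
have [delta [d0 hstep]] := step_lemma a0 b0 eta0 m0 mL hcs hb Msym hMlo KM0 hKM KB0 hKB
  KAA0 hKAA hrho Bq Kd0 hKd.
exists delta; split => // k.
have lamc j : exists s, (flexpd f A B alpha beta T x0 j).2 = A *m s.
  elim: j => [|j [s hs]]; first by exists 0; rewrite mulmx0.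
  rewrite /flexpd iterS -/(flexpd f A B alpha beta T x0 j).
  case: (flexpd f A B alpha beta T x0 j) hs => x lam /= ->.
  by rewrite scalemxAr -mulmxDr; eexists.
have [s1 hs1] := lamc k.+1.
have zk1 : flexpd f A B alpha beta T x0 k.+1 =
    flexpd_step f A B alpha beta T (flexpd f A B alpha beta T x0 k) by rewrite /flexpd iterS.
rewrite zk1 in hs1 *.
move: hs1; case: (flexpd f A B alpha beta T x0 k) => x lam /= hs1.
set x1 := iter T _ x in hs1 *.
rewrite !GCdist2E.
have [u hu] := lscol.
have [c hc] : exists c : 'I_n.+1 -> R, forall i, m <= c i <= L /\
    derive1 (f i) (x i 0) - derive1 (f i) (xs i 0) = c i * (x i 0 - xs i 0).
  apply: (@fin_all_exists _ (fun=> R) (fun i c => m <= c <= L /\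
    derive1 (f i) (x i 0) - derive1 (f i) (xs i 0) = c * (x i 0 - xs i 0))) => i.
  have [c [h1 h2]] := mvt_bound (ddf i) (hdd i) (xs i 0) (x i 0).
  by exists c.
pose dv := \row_i c i.
have hdv i : m <= dv 0 i <= L by rewrite mxE; case: (hc i).
have hg : gradf f x - gradf f xs = diag_mx dv *m (x - xs).
  apply/matrixP => i j; rewrite ord1 mul_diag_mx !mxE.
  by case: (hc i) => _ ->.
have hx1 : x1 = (1%:M - alpha *: B) ^+ T *m x
    - alpha *: (Cmat B alpha T *m (gradf f x + A^T *m lam)).
  rewrite /x1 -iter_formula; apply: eq_iter => y.
  rewrite (mulmxDl 1%:M (- (alpha *: B)) y) mulNmx mul1mx -scalemxAl scalerDr opprD !addrA.
  by rewrite [LHS]addrAC [X in X - alpha *: (A^T *m lam) = _]addrAC.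
have Wxs : (1%:M - alpha *: B) *m xs = xs.
  by rewrite mulmxBl mul1mx -scalemxAl Bxs scaler0 subr0.
have hxs t : (1%:M - alpha *: B) ^+ t *m xs = xs.
  elim: t => [|t IH]; first by rewrite expr0 mul1mx.
  by rewrite exprSr -[_ * _]/(mulmx _ _) -mulmxA Wxs IH.
have EQ := key_eq (Mm := Mmat B alpha T) (W := 1%:M - alpha *: B) Cu (erefl _) Cinv
   (hxs T) hx1 hg KKT.
apply: (hstep _ _ _ _ (s1 - u) dv hdv EQ).
  by rewrite mulmxBr Axs subr0 addrAC.
by rewrite hs1 hu mulmxBr.
Qed.
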